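(* Let $H$ be a bialgebra over a field $\Bbbk$ and $C$ a left $H$-module coalgebra. There is a bijection between the set of $H$-module subcoalgebras of $C$ and the set of closed $\mathfrak{M}^H$-module subcategories of $\mathfrak{M}^C$ (under which an $H$-module subcoalgebra $D$ corresponds to the full subcategory $\mathfrak{M}^D=\{M\in\mathfrak{M}^C\mid\rho_M(M)\subset M\otimes D\}$).
   Context: A left $H$-module coalgebra is a coalgebra $C$ with left $H$-action such that $\Delta(hc)=h_{(1)}c_{(1)}\otimes h_{(2)}c_{(2)}$, $\varepsilon(hc)=\varepsilon(h)\varepsilon(c)$. An $H$-module subcoalgebra of $C$ is a subcoalgebra that is also an $H$-submodule. $\mathfrak{M}^C$ denotes right $C$-comodules; for $X$ in $\mathfrak{M}^H$ (right $H$-comodules) and $M\in\mathfrak{M}^C$, $X\otimes M\in\mathfrak{M}^C$ with coaction $x\otimes m\mapsto x_{(0)}\otimes m_{(0)}\otimes x_{(1)}m_{(1)}$. A closed subcategory of a Grothendieck category is a full subcategory closed under subobjects, quotient objects and direct sums. A closed $\mathfrak{M}^H$-module subcategory of $\mathfrak{M}^C$ is a closed subcategory $\mathcal{M}$ such that $X\otimes M\in\mathcal{M}$ for all $X\in\mathfrak{M}^H$, $M\in\mathcal{M}$. *)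

(* Defs.v *)
(* vector spaces over a field K are modelled as free
   K-vector spaces {malg K[I]} on a (basis) index type I (multinomials' monalg).
   Every K-vector space is free, so this is faithful up to isomorphism. *)
From HB Require Import structures.
From mathcomp Require Import all_boot all_algebra.
From mathcomp Require Import finmap.
From mathcomp Require Import monalg.
Set Implicit Arguments. Unset Strict Implicit. Unset Printing Implicit Defensive.
Import GRing.Theory.
Local Open Scope ring_scope.


Section Hopf.
Variable K : fieldType.

Definition FV (I : choiceType) := {malg K[I]}.

Definition lext {I J : choiceType} (f : I -> FV J) (v : FV I) : FV J :=
  \sum_(i <- msupp v) v@_i *: f i.

(* v (x) w  in  V (x) W = FV (I * J) *)
Definition tens {I J : choiceType} (v : FV I) (w : FV J) : FV (I * J)%type :=
  lext (fun i => lext (fun j => << (i, j) >>) w) v.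

Definition tmap {I J I' J' : choiceType} (f : FV I -> FV I') (g : FV J -> FV J')
  : FV (I * J)%type -> FV (I' * J')%type :=
  lext (fun p => tens (f << p.1 >>) (g << p.2 >>)).

Definition assocr {I J L : choiceType} : FV ((I * J) * L)%type -> FV (I * (J * L))%type :=
  lext (fun p => << (p.1.1, (p.1.2, p.2)) >>).

(* id (x) e  and  e (x) id  followed by the identification with K (x) V = V = V (x) K *)
Definition contr_r {I J : choiceType} (e : FV J -> K) : FV (I * J)%type -> FV I :=
  lext (fun p => e << p.2 >> *: << p.1 >>).
Definition contr_l {I J : choiceType} (e : FV J -> K) : FV (J * I)%type -> FV I :=
  lext (fun p => e << p.1 >> *: << p.2 >>).

Definition islin {I J : choiceType} (f : FV I -> FV J) :=
  forall (a : K) (u v : FV I), f (a *: u + v) = a *: f u + f v.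
Definition islinK {I : choiceType} (f : FV I -> K) :=
  forall (a : K) (u v : FV I), f (a *: u + v) = a * f u + f v.
Definition isbilin {I J L : choiceType} (m : FV I -> FV J -> FV L) :=
  (forall (a : K) x y z, m (a *: x + y) z = a *: m x z + m y z) /\
  (forall (a : K) x y z, m x (a *: y + z) = a *: m x y + m x z).

Definition tbil {I J L : choiceType} (m : FV I -> FV J -> FV L)
    (x : FV (I * I)%type) (y : FV (J * J)%type) : FV (L * L)%type :=
  lext (fun p => lext (fun q => tens (m << p.1 >> << q.1 >>) (m << p.2 >> << q.2 >>)) y) x.

Definition is_coalgebra {J : choiceType} (d : FV J -> FV (J * J)%type) (e : FV J -> K) :=
  [/\ islin d, islinK e,
      (forall c, assocr (tmap d id (d c)) = tmap id d (d c)),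
      (forall c, contr_l e (d c) = c) &
      (forall c, contr_r e (d c) = c)].

Definition is_bialgebra {B : choiceType} (m : FV B -> FV B -> FV B) (u : FV B)
    (d : FV B -> FV (B * B)%type) (e : FV B -> K) :=
  [/\ isbilin m,
      (forall x y z, m (m x y) z = m x (m y z)),
      (forall x, m u x = x /\ m x u = x),
      is_coalgebra d e &
      [/\ (forall x y, d (m x y) = tbil m (d x) (d y)),
          d u = tens u u,
          (forall x y, e (m x y) = e x * e y) &
          e u = 1]].

Definition is_module_coalgebra {B J : choiceType} (m : FV B -> FV B -> FV B) (u : FV B)
    (dH : FV B -> FV (B * B)%type) (eH : FV B -> K)
    (dC : FV J -> FV (J * J)%type) (eC : FV J -> K) (act : FV B -> FV J -> FV J) :=
  [/\ isbilin act,
      (forall h g c, act (m h g) c = act h (act g c)),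
      (forall c, act u c = c),
      (forall h c, dC (act h c) = tbil act (dH h) (dC c)) &
      (forall h c, eC (act h c) = eH h * eC c)].

Definition is_comodule {J I : choiceType} (d : FV J -> FV (J * J)%type) (e : FV J -> K)
    (rho : FV I -> FV (I * J)%type) :=
  [/\ islin rho,
      (forall x, assocr (tmap rho id (rho x)) = tmap id d (rho x)) &
      (forall x, contr_r e (rho x) = x)].

(* objects of M^C: a space with a (candidate) coaction *)
Record comod (J : choiceType) := Comod {
  cI : choiceType;
  crho : FV cI -> FV (cI * J)%type }.
Arguments crho {J} c _.

Definition is_comod {J : choiceType} (d : FV J -> FV (J * J)%type) (e : FV J -> K) (M : comod J) := is_comodule d e (crho M).

Definition is_comod_mor {J : choiceType} (M N : comod J) (f : FV (cI M) -> FV (cI N)) :=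
  islin f /\ forall x, crho N (f x) = tmap f id (crho M x).

Arguments is_comod_mor {J} M N f.

(* direct sum of a family of comodules (basis = disjoint union of bases) *)
Definition dsum {J : choiceType} {T : choiceType} (F : T -> comod J) : comod J :=
  @Comod J {i : T & cI (F i)}
    (lext (fun p : {i : T & cI (F i)} =>
       tmap (lext (fun x : cI (F (tag p)) => << @Tagged T (tag p) (fun i => cI (F i)) x >>))
            id (crho (F (tag p)) << tagged p >>))).

(* X (x) M for X a right H-comodule (basis IX, coaction rhoX) and M in M^C:
   x (x) m |-> x_(0) (x) m_(0) (x) x_(1) m_(1) *)
Definition ctens {B J : choiceType} (act : FV B -> FV J -> FV J)
    (IX : choiceType) (rhoX : FV IX -> FV (IX * B)%type) (M : comod J) : comod J :=
  @Comod J (IX * cI M)%type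
    (lext (fun p : (IX * cI M)%type =>
       lext (fun a => lext (fun b => tens << (a.1, b.1) >> (act << a.2 >> << b.2 >>))
                          (crho M << p.2 >>))
            (rhoX << p.1 >>))).

Definition in_tens {I J : choiceType} (D : FV J -> Prop) (x : FV (I * J)%type) :=
  exists s : seq (FV I * FV J), (forall p, p \in s -> D p.2) /\
    x = \sum_(p <- s) tens p.1 p.2.
Definition in_tens2 {J : choiceType} (D : FV J -> Prop) (x : FV (J * J)%type) :=
  exists s : seq (FV J * FV J), (forall p, p \in s -> D p.1 /\ D p.2) /\
    x = \sum_(p <- s) tens p.1 p.2.

Definition is_Hsubcoalg {B J : choiceType} (dC : FV J -> FV (J * J)%type)
    (act : FV B -> FV J -> FV J) (D : FV J -> Prop) :=
  [/\ D 0, (forall (a : K) x y, D x -> D y -> D (a *: x + y)),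
      (forall c, D c -> in_tens2 D (dC c)) &
      (forall h c, D c -> D (act h c))].

Definition comodD {J : choiceType} (d : FV J -> FV (J * J)%type) (e : FV J -> K) (D : FV J -> Prop) : comod J -> Prop :=
  fun M => is_comod d e M /\ forall x, in_tens D (crho M x).

(* closed M^H-module subcategories of M^C (given by their class of objects) *)
Definition is_closed_Hmod {B J : choiceType} (dC : FV J -> FV (J * J)%type) (eC : FV J -> K)
    (dH : FV B -> FV (B * B)%type) (eH : FV B -> K) (act : FV B -> FV J -> FV J)
    (P : comod J -> Prop) :=
  [/\ (forall M, P M -> is_comod dC eC M),
      (forall M N f, is_comod dC eC M -> is_comod dC eC N -> is_comod_mor N M f ->
         injective f -> P M -> P N),
      (forall M N f, is_comod dC eC M -> is_comod dC eC N -> is_comod_mor M N f ->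
         (forall y, exists x, f x = y) -> P M -> P N),
      (forall (T : choiceType) (F : T -> comod J), (forall i, P (F i)) -> P (dsum F)) &
      (* M^H-module subcategory *)
      (forall (IX : choiceType) (rhoX : FV IX -> FV (IX * B)%type) M,
         is_comodule dH eH rhoX -> P M -> P (ctens act rhoX M))].

End Hopf.

(* Main.v *)
Require Import Defs.
From HB Require Import structures.
From mathcomp Require Import all_boot all_algebra.
From mathcomp Require Import finmap monalg.
From mathcomp Require Import boolp.
From mathcomp Require classical_sets.
Set Implicit Arguments. Unset Strict Implicit. Unset Printing Implicit Defensive.
Import GRing.Theory.
Local Open Scope ring_scope.
Section S0.
Variable K : fieldType.
Local Notation V I := (FV K I).

Lemma lextEw (I J : choiceType) (f : I -> V J) v (d : {fset I}) : (msupp v `<=` d)%fset ->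
  lext f v = \sum_(i <- d) v@_i *: f i.
Proof.
move=> sd; rewrite /lext (big_fset_incl _ sd) // => x _ /mcoeff_outdom ->.
by rewrite scale0r.
Qed.

Lemma lextD (I J : choiceType) (f : I -> V J) u v : lext f (u + v) = lext f u + lext f v.
Proof.
rewrite (@lextEw _ _ f (u+v) (msupp u `|` msupp v)%fset) ?msuppD_le //.
rewrite (@lextEw _ _ f u (msupp u `|` msupp v)%fset) ?fsubsetUl //.
rewrite (@lextEw _ _ f v (msupp u `|` msupp v)%fset) ?fsubsetUr //.
rewrite -big_split /=; apply: eq_bigr => i _; by rewrite mcoeffD scalerDl.
Qed.

Lemma lextZ (I J : choiceType) (f : I -> V J) a u : lext f (a *: u) = a *: lext f u.
Proof.
rewrite (@lextEw _ _ f (a *: u) (msupp u)) ?msuppZ_le // /lext scaler_sumr.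
by apply: eq_bigr => i _; rewrite mcoeffZ scalerA.
Qed.

Lemma lext_lin (I J : choiceType) (f : I -> V J) : islin (lext f).
Proof. by move=> a u v; rewrite lextD lextZ. Qed.

Lemma lext0 (I J : choiceType) (f : I -> V J) : lext f 0 = 0.
Proof. by rewrite /lext msupp0 big_seq_fset0. Qed.

Lemma lextU (I J : choiceType) (f : I -> V J) i : lext f << i >> = f i.
Proof.
rewrite (@lextEw _ _ f _ [fset i]%fset) ?msuppU_le // big_seq_fset1.
by rewrite mcoeffUU scale1r.
Qed.

Lemma lext_sum (I J : choiceType) (f : I -> V J) (T : Type) (s : seq T) (P : pred T) (F : T -> V I) :
  lext f (\sum_(t <- s | P t) F t) = \sum_(t <- s | P t) lext f (F t).
Proof.
elim: s => [|x s IH]; first by rewrite !big_nil lext0.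
by rewrite !big_cons; case: (P x); rewrite ?lextD IH.
Qed.

Lemma eq_lext (I J : choiceType) (f g : I -> V J) v : (forall i, f i = g i) -> lext f v = lext g v.
Proof. by move=> fg; apply: eq_bigr => i _; rewrite fg. Qed.

Lemma eq_lext_supp (I J : choiceType) (f g : I -> V J) v :
  (forall i, i \in msupp v -> f i = g i) -> lext f v = lext g v.
Proof. by move=> fg; rewrite /lext big_seq_cond [RHS]big_seq_cond; apply: eq_bigr => i /andP[/fg ->]. Qed.

Lemma lext_linf (I J : choiceType) (f g : I -> V J) a v :
  lext (fun i => a *: f i + g i) v = a *: lext f v + lext g v.
Proof.
rewrite /lext scaler_sumr -big_split /=; apply: eq_bigr => i _.
by rewrite scalerDr !scalerA mulrC.
Qed.


Lemma mkmalgUZ (I : choiceType) (c : K) (i : I) : << c *g i >> = c *: (<< i >> : V I).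
Proof. by apply/malgP => k; rewrite mcoeffZ !mcoeffU mulr_natr. Qed.

Lemma lext_basis (I : choiceType) (v : V I) : lext (fun i => << i >>) v = v.
Proof.
rewrite [RHS]monalgE; apply: eq_bigr => i _; by rewrite mkmalgUZ.
Qed.

Section Lin.
Variables (I J : choiceType) (F : V I -> V J) (HF : islin F).
Lemma linE a u v : F (a *: u + v) = a *: F u + F v.
Proof. exact: HF. Qed.
Lemma linD u v : F (u + v) = F u + F v.
Proof. by have := linE 1 u v; rewrite !scale1r. Qed.
Lemma lin0 : F 0 = 0.
Proof. have h := linE 1 0 0; rewrite scale1r !addr0 scale1r in h. by apply: (addrI (F 0)); rewrite addr0 -h. Qed.
Lemma linZ a u : F (a *: u) = a *: F u.
Proof. by have := linE a u 0; rewrite !addr0 lin0 addr0. Qed.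
Lemma lin_sum (T : Type) (s : seq T) (P : pred T) (G : T -> V I) :
  F (\sum_(t <- s | P t) G t) = \sum_(t <- s | P t) F (G t).
Proof.
elim: s => [|x s IH]; first by rewrite !big_nil lin0.
by rewrite !big_cons; case: (P x); rewrite ?linD IH.
Qed.
Lemma lin_lext (L : choiceType) (f : L -> V I) v : F (lext f v) = lext (fun i => F (f i)) v.
Proof. by rewrite /lext lin_sum; apply: eq_bigr => i _; rewrite linZ. Qed.
Lemma lin_basis v : F v = lext (fun i => F << i >>) v.
Proof. by rewrite -{1}(lext_basis v) lin_lext. Qed.
End Lin.

Lemma lin_eq (I J : choiceType) (F G : V I -> V J) : islin F -> islin G ->
  (forall i, F << i >> = G << i >>) -> forall v, F v = G v.
Proof. by move=> HF HG e v; rewrite (lin_basis HF) (lin_basis HG); apply: eq_lext. Qed.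

Lemma lin_eq_supp (I J : choiceType) (F G : V I -> V J) v : islin F -> islin G ->
  (forall i, i \in msupp v -> F << i >> = G << i >>) -> F v = G v.
Proof. by move=> HF HG e; rewrite (lin_basis HF) (lin_basis HG); apply: eq_lext_supp. Qed.

Section LinK.
Variables (I : choiceType) (F : V I -> K) (HF : islinK F).
Lemma linKE a u v : F (a *: u + v) = a * F u + F v.
Proof. exact: HF. Qed.
Lemma linKD u v : F (u + v) = F u + F v.
Proof. by have := linKE 1 u v; rewrite scale1r mul1r. Qed.
Lemma linK0 : F 0 = 0.
Proof. have h := linKE 1 0 0; rewrite scale1r !addr0 mul1r in h. by apply: (addrI (F 0)); rewrite addr0 -h. Qed.
Lemma linKZ a u : F (a *: u) = a * F u.
Proof. by have := linKE a u 0; rewrite !addr0 linK0 addr0. Qed.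
Lemma linK_sum (T : Type) (s : seq T) (P : pred T) (G : T -> V I) :
  F (\sum_(t <- s | P t) G t) = \sum_(t <- s | P t) F (G t).
Proof.
elim: s => [|x s IH]; first by rewrite !big_nil linK0.
by rewrite !big_cons; case: (P x); rewrite ?linKD IH.
Qed.
Lemma linK_basis v : F v = \sum_(i <- msupp v) v@_i * F << i >>.
Proof.
rewrite -{1}(lext_basis v) /lext linK_sum; apply: eq_bigr => i _; by rewrite linKZ.
Qed.
End LinK.

Lemma linK_eq (I : choiceType) (F G : V I -> K) : islinK F -> islinK G ->
  (forall i, F << i >> = G << i >>) -> forall v, F v = G v.
Proof. by move=> HF HG e v; rewrite (linK_basis HF) (linK_basis HG); apply: eq_bigr => i _; rewrite e. Qed.

Lemma islin_comp (I J L : choiceType) (g : V J -> V L) (f : V I -> V J) :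
  islin g -> islin f -> islin (fun x => g (f x)).
Proof. by move=> Hg Hf a u v; rewrite (linE Hf) (linE Hg). Qed.
Lemma islinK_comp (I J : choiceType) (g : V J -> K) (f : V I -> V J) :
  islinK g -> islin f -> islinK (fun x => g (f x)).
Proof. by move=> Hg Hf a u v; rewrite (linE Hf) (linKE Hg). Qed.
Lemma islin_id (I : choiceType) : islin (fun x : V I => x).
Proof. by []. Qed.
Lemma islin_lextp (I J L : choiceType) (F : I -> V J -> V L) (u : V I) :
  (forall i, islin (F i)) -> islin (fun v => lext (fun i => F i v) u).
Proof. by move=> HF a x y; rewrite -lext_linf; apply: eq_lext => i; rewrite (linE (HF i)). Qed.
Lemma islin_add (I J : choiceType) (F G : V I -> V J) : islin F -> islin G -> islin (fun x => F x + G x).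
Proof. by move=> HF HG a u v; rewrite (linE HF) (linE HG) scalerDr addrACA. Qed.
Lemma islin_scale (I J : choiceType) (F : V I -> V J) c : islin F -> islin (fun x => c *: F x).
Proof. by move=> HF a u v; rewrite (linE HF) scalerDr !scalerA mulrC. Qed.
Lemma islinK_coef (I : choiceType) (i : I) : islinK (fun v : V I => v@_i).
Proof. by move=> a u v; rewrite mcoeffD mcoeffZ. Qed.
Lemma islin_scalK (I J : choiceType) (F : V I -> K) (y : V J) : islinK F -> islin (fun x => F x *: y).
Proof. by move=> HF a u v; rewrite (linKE HF) scalerDl scalerA. Qed.

End S0.
Ltac lineq := lazymatch goal with |- forall x, @?L x = @?R x => apply: (@lin_eq _ _ _ L R) end.

Section S1.
Variable K : fieldType.
Local Notation V I := (FV K I).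

Lemma tensU (I J : choiceType) i j : tens (<< i >> : V I) (<< j >> : V J) = << (i, j) >>.
Proof. by rewrite /tens lextU lextU. Qed.

Lemma tensUl (I J : choiceType) i (y : V J) : tens (<< i >> : V I) y = lext (fun j => << (i, j) >>) y.
Proof. by rewrite /tens lextU. Qed.

Lemma islin_tensl (I J : choiceType) (y : V J) : islin (fun x : V I => tens x y).
Proof. exact: lext_lin. Qed.

Lemma islin_tensr (I J : choiceType) (x : V I) : islin (fun y : V J => tens x y).
Proof. by apply: islin_lextp => i; apply: lext_lin. Qed.

Lemma islin_tmap (I J I' J' : choiceType) (f : V I -> V I') (g : V J -> V J') : islin (tmap f g).
Proof. exact: lext_lin. Qed.
Lemma islin_assocr (I J L : choiceType) : islin (@assocr K I J L).
Proof. exact: lext_lin. Qed.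
Lemma islin_contr_r (I J : choiceType) e : islin (@contr_r K I J e).
Proof. exact: lext_lin. Qed.
Lemma islin_contr_l (I J : choiceType) e : islin (@contr_l K I J e).
Proof. exact: lext_lin. Qed.

Ltac slin := repeat (first [ assumption | apply: lext_lin | apply: islin_id | apply: islin_tensl
   | apply: islin_tensr | apply: islin_tmap | apply: islin_assocr | apply: islin_contr_r
   | apply: islin_contr_l | (apply: islin_lextp; intro) | apply: islin_comp ]).

Lemma tensD_l (I J : choiceType) (x x' : V I) (y : V J) : tens (x + x') y = tens x y + tens x' y.
Proof. exact: (linD (islin_tensl y)). Qed.
Lemma tensD_r (I J : choiceType) (x : V I) (y y' : V J) : tens x (y + y') = tens x y + tens x y'.
Proof. exact: (linD (islin_tensr x)). Qed.
Lemma tensZ_l (I J : choiceType) a (x : V I) (y : V J) : tens (a *: x) y = a *: tens x y.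
Proof. exact: (linZ (islin_tensl y)). Qed.
Lemma tensZ_r (I J : choiceType) a (x : V I) (y : V J) : tens x (a *: y) = a *: tens x y.
Proof. exact: (linZ (islin_tensr x)). Qed.
Lemma tens0_l (I J : choiceType) (y : V J) : tens (0 : V I) y = 0.
Proof. exact: (lin0 (islin_tensl y)). Qed.
Lemma tens0_r (I J : choiceType) (x : V I) : tens x (0 : V J) = 0.
Proof. exact: (lin0 (islin_tensr x)). Qed.

Lemma tmapU (I J I' J' : choiceType) (f : V I -> V I') (g : V J -> V J') i j :
  tmap f g << (i, j) >> = tens (f << i >>) (g << j >>).
Proof. by rewrite /tmap lextU. Qed.

Lemma tmap_tens (I J I' J' : choiceType) (f : V I -> V I') (g : V J -> V J') x y :
  islin f -> islin g -> tmap f g (tens x y) = tens (f x) (g y).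
Proof.
move=> Hf Hg; move: x; lineq; try by slin.
move=> i /=; move: y; lineq; try by slin.
by move=> j /=; rewrite tensU tmapU.
Qed.

End S1.
Section S2.
Variable K : fieldType.
Local Notation V I := (FV K I).

Definition assocl {I J L : choiceType} : V (I * (J * L))%type -> V ((I * J) * L)%type :=
  lext (fun p => << ((p.1, p.2.1), p.2.2) >>).
Lemma islin_assocl (I J L : choiceType) : islin (@assocl I J L).
Proof. exact: lext_lin. Qed.

Ltac slin := repeat (first [ assumption | apply: lext_lin | apply: islin_id | apply: islin_tensl
   | apply: islin_tensr | apply: islin_tmap | apply: islin_assocr | apply: islin_assocl | apply: islin_contr_r
   | apply: islin_contr_l | (apply: islin_lextp; intro) | apply: islin_comp ]).

Lemma assocr_tens (I J L : choiceType) (x : V I) (y : V J) (z : V L) :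
  assocr (tens (tens x y) z) = tens x (tens y z).
Proof.
move: x; lineq; try by slin. move=> i /=; move: y; lineq; try by slin.
move=> j /=; move: z; lineq; try by slin. by move=> k /=; rewrite !tensU /assocr lextU.
Qed.

Lemma assocl_tens (I J L : choiceType) (x : V I) (y : V J) (z : V L) :
  assocl (tens x (tens y z)) = tens (tens x y) z.
Proof.
move: x; lineq; try by slin. move=> i /=; move: y; lineq; try by slin.
move=> j /=; move: z; lineq; try by slin. by move=> k /=; rewrite !tensU /assocl lextU.
Qed.

Lemma assoclr (I J L : choiceType) (w : V ((I * J) * L)%type) : assocl (assocr w) = w.
Proof.
move: w; lineq; try by slin. by move=> [[i j] k] /=; rewrite /assocr /assocl !lextU.
Qed.

Lemma tmap_comp (I J I1 J1 I2 J2 : choiceType) (f : V I1 -> V I2) (g : V J1 -> V J2)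
  (f' : V I -> V I1) (g' : V J -> V J1) z :
  islin f -> islin g -> islin f' -> islin g' ->
  tmap f g (tmap f' g' z) = tmap (fun x => f (f' x)) (fun y => g (g' y)) z.
Proof.
move=> *; move: z; lineq; try by slin.
by move=> [i j] /=; rewrite !tmapU tmap_tens.
Qed.

Lemma tmap_id (I J : choiceType) (z : V (I * J)%type) : tmap id id z = z.
Proof. move: z; lineq; try by slin. by move=> [i j]; rewrite tmapU tensU. Qed.

Lemma tmap_ext (I J I' J' : choiceType) (f f' : V I -> V I') (g g' : V J -> V J') z :
  (forall i, f << i >> = f' << i >>) -> (forall j, g << j >> = g' << j >>) ->
  tmap f g z = tmap f' g' z.
Proof. by move=> ef eg; apply: eq_lext => p; rewrite ef eg. Qed.

Lemma assocr_tmap (I J L I' J' L' : choiceType) (f : V I -> V I') (g : V J -> V J') (h : V L -> V L') z :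
  islin f -> islin g -> islin h ->
  assocr (tmap (tmap f g) h z) = tmap f (tmap g h) (assocr z).
Proof.
move=> *; move: z; lineq; try by slin.
move=> [[i j] k] /=; rewrite !tmapU assocr_tens /assocr lextU /=.
by rewrite !tmapU.
Qed.

Lemma contr_r_tens (I J : choiceType) (e : V J -> K) (x : V I) (y : V J) :
  islinK e -> contr_r e (tens x y) = e y *: x.
Proof.
move=> He; move: x; lineq; try by slin. by apply: islin_scale; slin.
move=> i /=; move: y; lineq; try by slin. by apply: islin_scalK.
by move=> j; rewrite tensU /contr_r lextU.
Qed.

Lemma contr_l_tens (I J : choiceType) (e : V J -> K) (x : V J) (y : V I) :
  islinK e -> contr_l e (tens x y) = e x *: y.
Proof.
move=> He; move: x; lineq; try by slin. by apply: islin_scalK.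
move=> i /=; move: y; lineq; try by slin. by apply: islin_scale; slin.
by move=> j; rewrite tensU /contr_l lextU.
Qed.

Lemma contr_r_tmap (I J I' : choiceType) (e : V J -> K) (f : V I -> V I') z :
  islinK e -> islin f -> contr_r e (tmap f id z) = f (contr_r e z).
Proof.
move=> He Hf; move: z; lineq; try by slin.
move=> [i j] /=; rewrite tmapU contr_r_tens // /contr_r lextU /=. by rewrite (linZ Hf).
Qed.

Definition coef {I J : choiceType} (phi : I -> K) : V (I * J)%type -> V J :=
  lext (fun p => phi p.1 *: << p.2 >>).
Definition row {I J : choiceType} (i : I) : V (I * J)%type -> V J := coef (fun k => (k == i)%:R).

Lemma islin_coef (I J : choiceType) phi : islin (@coef I J phi).
Proof. exact: lext_lin. Qed.
Lemma islin_row (I J : choiceType) i : islin (@row I J i).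
Proof. exact: lext_lin. Qed.

Lemma coef_tensU (I J : choiceType) (phi : I -> K) i (y : V J) : coef phi (tens << i >> y) = phi i *: y.
Proof.
rewrite tensUl /coef (lin_lext (lext_lin _)).
move: y; lineq; try by slin. by apply: islin_scale; slin.
by move=> j /=; rewrite !lextU.
Qed.

Lemma row_tens (I J : choiceType) i (x : V I) (y : V J) : row i (tens x y) = x@_i *: y.
Proof.
move: x; lineq; try by slin. by apply: islin_scalK; apply: islinK_coef.
by move=> k; rewrite /row coef_tensU mcoeffU.
Qed.

Lemma sum_rows (I J : choiceType) (z : V (I * J)%type) (d : {fset I}) :
  (forall p, p \in msupp z -> p.1 \in d) ->
  z = \sum_(i <- d) tens << i >> (row i z).
Proof.
move=> Hd; rewrite -[LHS](lext_basis z).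
apply: (@lin_eq_supp _ _ _ (lext (fun i => << i >>)) (fun w => \sum_(i <- d) tens << i >> (row i w))); first by slin.
  move=> a u v; rewrite scaler_sumr -big_split /=; apply: eq_bigr => i _.
  by rewrite (linE (islin_row (I:=I) (J:=J) i)) tensD_r tensZ_r.
move=> [i j] /Hd /= di; rewrite lextU (big_fsetD1 i) //= big1_fset ?addr0 -?tensU.
  by rewrite row_tens mcoeffU eqxx mulr1n scale1r.
move=> k; rewrite in_fsetD1 => /andP[ki _] _.
by rewrite row_tens mcoeffU eq_sym (negbTE ki) mulr0n scale0r tens0_r.
Qed.

Definition fsts {I J : choiceType} (z : V (I * J)%type) : {fset I} := [fset p.1 | p in msupp z]%fset.
Lemma fstsP (I J : choiceType) (z : V (I * J)%type) p : p \in msupp z -> p.1 \in fsts z.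
Proof. by move=> pz; apply/imfsetP; exists p. Qed.

Lemma tmap_rows (I J I' : choiceType) (f : V I -> V I') (z : V (I * J)%type) :
  islin f -> tmap f id z = \sum_(i <- fsts z) tens (f << i >>) (row i z).
Proof.
move=> Hf; rewrite {1}(@sum_rows _ _ z (fsts z)); last exact: fstsP.
by rewrite (lin_sum (islin_tmap _ _)); apply: eq_bigr => i _; rewrite tmap_tens.
Qed.

Definition col {I J : choiceType} (j : J) (z : V (I * J)%type) : V I := contr_r (fun w => w@_j) z.

Lemma col_tmap (I J I' : choiceType) (f : V I -> V I') j (z : V (I * J)%type) :
  islin f -> col j (tmap f id z) = f (col j z).
Proof. by move=> Hf; rewrite /col contr_r_tmap //; apply: islinK_coef. Qed.

Lemma col_coef (I J : choiceType) (z : V (I * J)%type) i j : (col j z)@_i = z@_(i, j).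
Proof.
move: z; apply: linK_eq.
- by apply: islinK_comp; [apply: islinK_coef | slin].
- exact: islinK_coef.
move=> [a b]; rewrite /col /contr_r lextU /= mcoeffZ !mcoeffU.
by rewrite xpair_eqE; case: (a == i); case: (b == j); rewrite ?mulr1n ?mulr0n ?mulr1 ?mulr0.
Qed.

Lemma tmap_inj (I J I' : choiceType) (f : V I -> V I') :
  islin f -> injective f -> injective (@tmap K I J I' J f id).
Proof.
move=> Hf fi z z' e; apply/malgP => -[i j]; rewrite -!col_coef; congr (_@_i).
by apply: fi; rewrite -!col_tmap // e.
Qed.

End S2.
Section S3.
Variable K : fieldType.
Local Notation V I := (FV K I).

Definition subsp {I : choiceType} (D : V I -> Prop) :=
  D 0 /\ forall (a : K) x y, D x -> D y -> D (a *: x + y).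

Section Subsp.
Variables (I : choiceType) (D : V I -> Prop) (HD : subsp D).
Lemma subsp0 : D 0. Proof. by case: HD. Qed.
Lemma subspD x y : D x -> D y -> D (x + y).
Proof. by move=> *; rewrite -[x]scale1r; apply: HD.2. Qed.
Lemma subspZ a x : D x -> D (a *: x).
Proof. by move=> *; rewrite -[_ *: _]addr0; apply: HD.2 => //; apply: subsp0. Qed.
Lemma subsp_sum (T : Type) (s : seq T) (P : pred T) (F : T -> V I) :
  (forall t, P t -> D (F t)) -> D (\sum_(t <- s | P t) F t).
Proof.
move=> H; elim: s => [|x s IH]; first by rewrite big_nil; apply: subsp0.
rewrite big_cons; case Px: (P x) => //.
by apply: subspD => //; apply: H.
Qed.
Lemma subsp_lext (L : choiceType) (f : L -> V I) x : (forall p, D (f p)) -> D (lext f x).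
Proof. by move=> H; apply: subsp_sum => t _; apply: subspZ. Qed.
End Subsp.

Section InTens.
Variables (J : choiceType) (D : V J -> Prop) (HD : subsp D).

Lemma in_tens_rows (I : choiceType) (z : V (I * J)%type) : in_tens D z -> forall i, D (row i z).
Proof.
move=> [s [Hs ->]] i; rewrite (lin_sum (islin_row _)) big_seq.
by apply: subsp_sum => // p ps; rewrite row_tens; apply: subspZ => //; apply: Hs.
Qed.

Lemma rows_in_tens (I : choiceType) (z : V (I * J)%type) : (forall i, D (row i z)) -> in_tens D z.
Proof.
move=> H; exists [seq (<< i >>, row i z) | i <- fsts z]; split.
  by move=> p /mapP [i _ ->]; apply: H.
by rewrite big_map; apply: sum_rows; apply: fstsP.
Qed.

Lemma in_tens_lext (I L : choiceType) (f : L -> V (I * J)%type) x :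
  (forall p, in_tens D (f p)) -> in_tens D (lext f x).
Proof.
move=> H; apply: rows_in_tens => i; rewrite (lin_lext (islin_row _)).
by apply: subsp_lext => // p; apply: in_tens_rows.
Qed.

Lemma in_tens_tmap (I I' : choiceType) (g : V I -> V I') (z : V (I * J)%type) :
  islin g -> in_tens D z -> in_tens D (tmap g id z).
Proof.
move=> Hg Hz; apply: rows_in_tens => k; rewrite tmap_rows // (lin_sum (islin_row _)).
apply: subsp_sum => // i _; rewrite row_tens; apply: subspZ => //.
exact: in_tens_rows.
Qed.

Lemma in_tens_lin (I : choiceType) (z : V (I * J)%type) a z' : in_tens D z -> in_tens D z' -> in_tens D (a *: z + z').
Proof.
move=> H1 H2; apply: rows_in_tens => i; rewrite (linE (islin_row _)).
by apply: HD.2; apply: in_tens_rows.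
Qed.

End InTens.

End S3.
Section S4.
Variable K : fieldType.
Local Notation V I := (FV K I).

Definition indep {I : choiceType} (S : V I -> Prop) :=
  forall (s : seq (V I)) (a : V I -> K), uniq s -> (forall v, v \in s -> S v) ->
    \sum_(v <- s) a v *: v = 0 -> forall v, v \in s -> a v = 0.
Definition span {I : choiceType} (S : V I -> Prop) (w : V I) :=
  exists (s : seq (V I)) (a : V I -> K), (forall v, v \in s -> S v) /\ w = \sum_(v <- s) a v *: v.

Lemma indep_sub (I : choiceType) (S S' : V I -> Prop) : indep S -> (forall v, S' v -> S v) -> indep S'.
Proof. move=> HS sub s a us Hs; apply: HS => // v /Hs; exact: sub. Qed.

Lemma indep_add (I : choiceType) (S : V I -> Prop) w :
  indep S -> ~ span S w -> indep (fun v => S v \/ v = w).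
Proof.
move=> HS Nw s a us Hs e.
have Hrem : forall v, v \in rem w s -> S v.
  move=> v vr; case: (Hs v (mem_rem vr)) => // vw.
  by move: vr; rewrite vw mem_rem_uniqF.
case: (boolP (w \in s)) => ws; last first.
  apply: HS => // v vs; case: (Hs v vs) => // vw; by move: ws; rewrite -vw vs.
rewrite (perm_big _ (perm_to_rem ws)) big_cons /= in e.
have aw : a w = 0.
  apply: contrapT => /eqP naw; apply: Nw.
  exists (rem w s), (fun v => - (a w)^-1 * a v); split => //.
  have e' : a w *: w = - \sum_(v <- rem w s) a v *: v by apply/eqP; rewrite -addr_eq0 e.
  transitivity ((a w)^-1 *: (a w *: w)); first by rewrite scalerA mulVf // scale1r.
  rewrite e' scalerN scaler_sumr -sumrN; apply: eq_bigr => v _.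
  by rewrite scalerA mulNr scaleNr.
rewrite aw scale0r add0r in e.
have H0 := HS _ _ (rem_uniq w us) Hrem e.
move=> v vs; case: (eqVneq v w) => [->//|vw]; apply: H0.
by rewrite mem_rem_uniq // inE vw vs.
Qed.

Lemma chain_fin (T : eqType) (S0 : T -> Prop) (F : (T -> Prop) -> Prop) (s : seq T) :
  classical_sets.total_on F classical_sets.subset ->
  (forall v, v \in s -> S0 v \/ exists2 A, F A & A v) ->
  (forall v, v \in s -> S0 v) \/ (exists A, F A /\ forall v, v \in s -> S0 v \/ A v).
Proof.
move=> Ftot; elim: s => [|x s IH] H; first by left.
have IH' := IH (fun v vs => H v ltac:(by rewrite inE vs orbT)).
have Hx := H x (mem_head x s).
case: IH' => [allS0|[A [FA HA]]]; case: Hx => [S0x|[B FB Bx]].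
- by left => v; rewrite inE => /orP[/eqP ->|/allS0].
- right; exists B; split => // v; rewrite inE => /orP[/eqP ->|/allS0]; by [right|left].
- right; exists A; split => // v; rewrite inE => /orP[/eqP ->|/HA]; by [left|].
- case: (Ftot A B FA FB) => AB.
  + right; exists B; split => // v; rewrite inE => /orP[/eqP ->|/HA[]]; [by right|by left|].
    by move=> /AB; right.
  + right; exists A; split => // v; rewrite inE => /orP[/eqP ->|/HA//].
    by right; apply: AB.
Qed.

Lemma ext_basis (I : choiceType) (W S0 : V I -> Prop) : subsp W -> (forall v, S0 v -> W v) -> indep S0 ->
  exists S, [/\ (forall v, S0 v -> S v), (forall v, S v -> W v), indep S & (forall w, W w -> span S w)].
Proof.
move=> HW S0W HS0.
pose P := fun A : V I -> Prop => (forall v, A v -> W v) /\ indep (fun v => S0 v \/ A v).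
have [A [[AW Aind] Amax]] : exists A, P A /\ forall B, classical_sets.proper A B -> ~ P B.
  apply: classical_sets.Zorn_bigcup => F FP Ftot; split.
    by move=> v [A FA Av]; exact: (FP A FA).1 v Av.
  move=> s a us Hs.
  have := @chain_fin _ S0 F s Ftot (fun v vs => Hs v vs).
  case=> [allS0|[A [FA HA]]].
    by apply: HS0.
  by apply: (FP A FA).2.
exists (fun v => S0 v \/ A v); split.
- by move=> v; left.
- by move=> v [/S0W|/AW].
- exact: Aind.
move=> w Ww; apply: contrapT => Nw.
apply: (Amax (fun v => A v \/ v = w)).
- split; first by move=> v Av; left.
  move=> /(_ w (or_intror erefl)) Aw; apply: Nw.
  exists [:: w], (fun _ => 1); split; first by move=> v; rewrite inE => /eqP ->; right.
  by rewrite big_seq1 scale1r.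
- split; first by move=> v [/AW|->].
  apply: (indep_sub (indep_add Aind Nw)) => v; tauto.
Qed.

End S4.
Section S5.
Variable K : fieldType.
Local Notation V I := (FV K I).

Lemma span_sub (I : choiceType) (W S : V I -> Prop) w : subsp W -> (forall v, S v -> W v) -> span S w -> W w.
Proof.
move=> HW SW [s [a [Hs ->]]]; rewrite big_seq.
by apply: subsp_sum => // v vs; apply: subspZ => //; apply: SW; apply: Hs.
Qed.

Section BT.
Variables (I : choiceType) (S : V I -> Prop).
Definition bT : choiceType := {v : V I | `[< S v >]}.
Definition bI : V bT -> V I := lext (fun t => val t).
Lemma bI_lin : islin bI. Proof. exact: lext_lin. Qed.

Definition bcoef (x : V bT) (v : V I) : K := if insub v is Some t then x@_t else 0.

Lemma bI_E (x : V bT) : bI x = \sum_(v <- map val (msupp x)) bcoef x v *: v.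
Proof. by rewrite big_map; apply: eq_bigr => t _; rewrite /bcoef valK. Qed.

Lemma bI_uniq (x : V bT) : uniq (map val (msupp x)).
Proof. by rewrite map_inj_uniq ?fset_uniq //; apply: val_inj. Qed.

Lemma bI_inS (x : V bT) v : v \in map val (msupp x) -> S v.
Proof. by case/mapP => t _ ->; move: (valP t) => /asboolP. Qed.

Lemma bI_inj : indep S -> injective bI.
Proof.
move=> HS x y e; apply/eqP; rewrite -subr_eq0; apply/eqP.
have e0 : bI (x - y) = 0.
  by rewrite -scaleN1r addrC (linE bI_lin) e scaleN1r addrC subrr.
move: e0; set z := x - y => e0; apply/malgP => k; rewrite mcoeff0.
case: (boolP (k \in msupp z)) => kz; last exact: mcoeff_outdom.
rewrite bI_E in e0; have := HS _ _ (bI_uniq z) (@bI_inS z) e0 (val k).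
by rewrite /bcoef valK => -> //; apply: map_f.
Qed.

Lemma bI_span (x : V bT) : span S (bI x).
Proof. by exists (map val (msupp x)), (bcoef x); split; [apply: bI_inS | apply: bI_E]. Qed.

Lemma bI_surj w : span S w -> exists x, bI x = w.
Proof.
move=> [s [a [Hs ->]]].
exists (\sum_(v <- s) a v *: (if insub v is Some t then << t >> else 0)).
rewrite (lin_sum bI_lin) big_seq [RHS]big_seq; apply: eq_bigr => v vs.
rewrite (linZ bI_lin); congr (_ *: _).
case: insubP => [t _ <-|]; first by rewrite /bI lextU.
by move/asboolP; case; apply: Hs.
Qed.
End BT.

Lemma subsp_obj (I : choiceType) (W : V I -> Prop) : subsp W ->
  exists (T : choiceType) (iota : V T -> V I),
    [/\ islin iota, injective iota, (forall x, W (iota x)) & (forall w, W w -> exists x, iota x = w)].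
Proof.
move=> HW; have [S [_ SW HS Hspan]] := @ext_basis K _ W (fun _ => False) HW (fun _ => False_ind _)
   (fun s a _ Hs _ v vs => False_ind _ (Hs v vs)).
exists (@bT _ S), (@bI _ S); split.
- exact: bI_lin.
- exact: bI_inj.
- by move=> x; apply: (span_sub HW SW); apply: bI_span.
- by move=> w /Hspan; apply: bI_surj.
Qed.

Lemma basis_indep (I I' : choiceType) (f : V I -> V I') : islin f -> injective f ->
  indep (fun v => exists i, v = f << i >>).
Proof.
move=> Hf fi s a us Hs e.
have [t st] : exists t : seq I, s = map (fun i => f << i >>) t.
  elim: s Hs {us e} => [|x s IH] Hs; first by exists [::].
  have [t st] := IH (fun v vs => Hs v ltac:(by rewrite inE vs orbT)).
  have [i xi] := Hs x (mem_head x s).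
  by exists (i :: t); rewrite st xi.
rewrite st in us e |- *; have ut := map_uniq us.
rewrite big_map in e.
have e' : f (\sum_(i <- t) a (f << i >>) *: << i >>) = f 0.
  by rewrite (lin_sum Hf) (lin0 Hf) -[RHS]e; apply: eq_bigr => i _; rewrite (linZ Hf).
move/fi: e' => e' v /mapP [k kt ->].
move/(congr1 (mcoeff k)): e'; rewrite mcoeff0 raddf_sum (bigD1_seq k) //= mcoeffZ mcoeffU eqxx mulr1.
rewrite big1 ?addr0 // => i ik; by rewrite mcoeffZ mcoeffU (negbTE ik) mulr0.
Qed.

Lemma left_inv (I I' : choiceType) (f : V I -> V I') : islin f -> injective f ->
  exists g : V I' -> V I, islin g /\ forall x, g (f x) = x.
Proof.
move=> Hf fi.
pose S0 := fun v => exists i, v = f << i >>.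
have [S [S0S _ HS Hspan]] := @ext_basis K _ (fun _ => True) S0
   (conj Logic.I (fun _ _ _ _ _ => Logic.I)) (fun _ _ => Logic.I) (basis_indep Hf fi).
have surj : forall w, exists x, @bI _ S x = w by move=> w; apply: bI_surj; apply: Hspan.
pose iinv w := projT1 (cid (surj w)).
have iinvK w : @bI _ S (iinv w) = w by rewrite /iinv; case: cid.
have iinv_lin : islin iinv.
  move=> a u v; apply: (bI_inj HS).
  by rewrite (linE (@bI_lin _ S)) !iinvK.
pose h (t : @bT _ S) : V I := match pselect (exists i, val t = f << i >>) with
  | left e => << projT1 (cid e) >> | right _ => 0 end.
exists (fun w => lext h (iinv w)); split; first by apply: islin_comp; [apply: lext_lin|].
move=> x; move: x; apply: (@lin_eq _ _ _ (fun x => lext h (iinv (f x))) (fun x => x)).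
- apply: (islin_comp (g:=fun y => lext h (iinv y)) (f:=f)) => //. by apply: islin_comp; [apply: lext_lin|].
- exact: islin_id.
move=> i /=.
have Si : `[< S (f << i >>) >] by apply/asboolP; apply: S0S; exists i.
pose ti : @bT _ S := Sub (f << i >>) Si.
have -> : iinv (f << i >>) = << ti >>.
  by apply: (bI_inj HS); rewrite iinvK /bI lextU.
rewrite lextU /h; case: pselect => [e|[]]; last by exists i.
case: cid => j /= ej; by move/fi: ej => ->.
Qed.

End S5.
Section S6.
Variable K : fieldType.
Local Notation V I := (FV K I).

Lemma tmap_compE (I J0 I1 J1 I2 J2 : choiceType) (f : V I1 -> V I2) (g : V J1 -> V J2)
  (f' : V I -> V I1) (g' : V J0 -> V J1) h k z :
  islin f -> islin g -> islin f' -> islin g' ->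
  (forall x, h x = f (f' x)) -> (forall y, k y = g (g' y)) ->
  tmap f g (tmap f' g' z) = tmap h k z.
Proof. move=> Hf Hg Hf' Hg' eh ek. rewrite (tmap_comp z Hf Hg Hf' Hg'). apply: tmap_ext => i. by rewrite eh. by rewrite ek. Qed.

Lemma tmap_idE (I J0 : choiceType) (f : V I -> V I) (g : V J0 -> V J0) z :
  (forall x, f x = x) -> (forall y, g y = y) -> tmap f g z = z.
Proof. move=> ef eg. rewrite -[RHS]tmap_id. apply: tmap_ext. move=> i; exact: ef. move=> j; exact: eg. Qed.

Lemma tmap_swap (I I' J0 J' : choiceType) (f : V I -> V I') (g : V J0 -> V J') z :
  islin f -> islin g -> tmap f id (tmap id g z) = tmap id g (tmap f id z).
Proof.
move=> Hf Hg.
rewrite (tmap_comp z Hf (@islin_id _ _) (@islin_id _ _) Hg) (tmap_comp z (@islin_id _ _) Hg Hf (@islin_id _ _)).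
by [].
Qed.

Variables (J : choiceType) (dC : V J -> V (J * J)%type) (eC : V J -> K).
Hypothesis HC : is_coalgebra dC eC.

Lemma dC_lin : islin dC. Proof. by case: HC. Qed.
Lemma eC_lin : islinK eC. Proof. by case: HC. Qed.
Lemma regular_comod : is_comodule dC eC dC.
Proof. by case: HC => *; split. Qed.

Lemma comod_cover (I : choiceType) (rho : V I -> V (I * J)%type) : islin rho ->
  (forall k : I, exists (I' : choiceType) (rho' : V I' -> V (I' * J)%type) (f : V I' -> V I) y,
     [/\ is_comodule dC eC rho', islin f, (forall x, rho (f x) = tmap f id (rho' x)) & f y = << k >>]) ->
  is_comodule dC eC rho.
Proof.
move=> Hr Hk; split.
- exact: Hr.
- move=> x; move: x; lineq.
  + apply: islin_comp; first exact: (@islin_assocr _ _ _ _).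
    exact: islin_comp (islin_tmap _ _) Hr.
  + exact: islin_comp (islin_tmap _ _) Hr.
  move=> k /=; have [I' [rho' [f [y [[Hr' Hco Hcu] Hf Hm fy]]]]] := Hk k.
  rewrite -fy Hm.
  rewrite (tmap_compE (h := fun x => tmap f id (rho' x)) (k := id) _ Hr (@islin_id _ _) Hf (@islin_id _ _)); last 2 first.
    by move=> x; rewrite Hm. by [].
  rewrite -(tmap_compE (f := tmap f id) (g := id) (f' := rho') (g' := id) _ (islin_tmap _ _) (@islin_id _ _) Hr' (@islin_id _ _)); last 2 first.
    by []. by [].
  rewrite (assocr_tmap _ Hf (@islin_id _ _) (@islin_id _ _)) Hco.
  rewrite (tmap_compE (f:=f) (g:=tmap id id) (f':=id) (g':=dC) (h := f) (k := dC) _ Hf (islin_tmap _ _) (@islin_id _ _) dC_lin); last 2 first.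
    by []. by move=> y0; rewrite tmap_id.
  rewrite -(tmap_compE (f := id) (g := dC) (f' := f) (g' := id) _ (@islin_id _ _) dC_lin Hf (@islin_id _ _)); last 2 first.
    by []. by [].
  by [].
- move=> x; move: x; lineq.
  + exact: islin_comp (islin_contr_r _) Hr.
  + exact: (@islin_id _ _).
  move=> k /=; have [I' [rho' [f [y [[Hr' Hco Hcu] Hf Hm fy]]]]] := Hk k.
  by rewrite -fy Hm (contr_r_tmap _ eC_lin Hf) Hcu.
Qed.

Lemma comod_sub (I I' : choiceType) (rho : V I -> V (I * J)%type) (rho' : V I' -> V (I' * J)%type)
  (iota : V I -> V I') :
  is_comodule dC eC rho' -> islin iota -> injective iota ->
  (forall x, tmap iota id (rho x) = rho' (iota x)) -> is_comodule dC eC rho.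
Proof.
move=> [Hr' Hco Hcu] Hi ii Hm.
have Hr : islin rho.
  move=> a u v; apply: (tmap_inj (J:=J) Hi ii).
  by rewrite (linE (islin_tmap _ _)) !Hm (linE Hi) (linE Hr').
split.
- exact: Hr.
- move=> x; apply: (tmap_inj (J:=(J*J)%type) Hi ii).
  have E : forall w : V (I * (J * J))%type, tmap iota id w = tmap iota (tmap id id) w.
    by move=> w; apply: tmap_ext => // j; rewrite tmap_id.
  rewrite [tmap iota id (assocr _)]E.
  rewrite -(assocr_tmap _ Hi (@islin_id _ _) (@islin_id _ _)).
  rewrite (tmap_compE (h := fun x => rho' (iota x)) (k := id) _ (islin_tmap _ _) (@islin_id _ _) Hr (@islin_id _ _)); last 2 first.
    by move=> x0; rewrite Hm. by [].
  rewrite -(tmap_compE (f := rho') (g := id) (f' := iota) (g' := id) _ Hr' (@islin_id _ _) Hi (@islin_id _ _)); last 2 first.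
    by []. by [].
  rewrite Hm Hco -Hm.
  exact: (esym (tmap_swap _ Hi dC_lin)).
- move=> x; apply: ii; rewrite -(contr_r_tmap _ eC_lin Hi).
  by rewrite Hm Hcu.
Qed.

End S6.
Section S7.
Variable K : fieldType.
Local Notation V I := (FV K I).
Local Notation rh M := (@crho K _ M).
Variables (B J : choiceType) (mH : V B -> V B -> V B) (uH : V B)
    (dH : V B -> V (B * B)%type) (eH : V B -> K)
    (dC : V J -> V (J * J)%type) (eC : V J -> K)
    (act : V B -> V J -> V J).
Hypotheses (HH : is_bialgebra mH uH dH eH) (HC : is_coalgebra dC eC)
    (HA : is_module_coalgebra mH uH dH eH dC eC act).

Lemma actr_lin h : islin (act h).
Proof. case: HA => [[_ H] _ _ _ _] a u v; exact: H. Qed.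
Lemma actl_lin c : islin (fun h => act h c).
Proof. case: HA => [[H _] _ _ _ _] a u v; exact: H. Qed.
Lemma act_dC h c : dC (act h c) = tbil act (dH h) (dC c).
Proof. by case: HA. Qed.
Lemma act_eC h c : eC (act h c) = eH h * eC c.
Proof. by case: HA. Qed.
Lemma eH_lin : islinK eH.
Proof. by case: HH => _ _ _ [] _ H. Qed.
Lemma dH_lin : islin dH.
Proof. by case: HH => _ _ _ [] H. Qed.
Lemma regularH : is_comodule dH eH dH.
Proof. by case: HH => _ _ _ [] *; split. Qed.

Section Sub.
Variables (D : V J -> Prop) (HD : subsp D).

Lemma comodD_sub (M N : comod K J) f : is_comod dC eC N -> @is_comod_mor K J N M f ->
  injective f -> comodD dC eC D M -> comodD dC eC D N.
Proof.
move=> HN [Hf Hm] fi [_ HMD]; split => // x.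
have [g [Hg gf]] := left_inv Hf fi.
have -> : rh N x = tmap g id (rh M (f x)).
  rewrite Hm (tmap_compE (h := id) (k := id) _ Hg (@islin_id _ _) Hf (@islin_id _ _)).
  - by rewrite tmap_id.
  - by move=> y; rewrite gf.
  - by [].
exact: (in_tens_tmap HD Hg (HMD (f x))).
Qed.

Lemma comodD_quot (M N : comod K J) f : @is_comod_mor K J M N f ->
  (forall y, exists x, f x = y) -> comodD dC eC D M -> is_comod dC eC N -> comodD dC eC D N.
Proof.
move=> [Hf Hm] surj [_ HMD] HN; split => // y.
pose s := lext (fun j => projT1 (cid (surj << j >>))).
have fs : forall v, f (s v) = v.
  apply: (@lin_eq _ _ _ (fun v => f (s v)) (fun v => v)).
  - exact: islin_comp Hf (lext_lin _).
  - exact: (@islin_id _ _).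
  by move=> j; rewrite /s lextU; case: cid.
by rewrite -[y]fs Hm; apply: (in_tens_tmap HD Hf).
Qed.

End Sub.

Section Dsum.
Variables (T : choiceType) (F : T -> comod K J).
Definition dinj (i : T) : V (cI (F i)) -> V (cI (dsum F)) :=
  lext (fun x : cI (F i) => << @Tagged T i (fun i => cI (F i)) x >>).
Arguments dinj i _ : clear implicits.
Lemma dinj_lin i : islin (dinj i). Proof. exact: lext_lin. Qed.
Lemma dsum_rhoU i t : rh (dsum F) << @Tagged T i (fun i => cI (F i)) t >> = tmap (dinj i) id (rh (F i) << t >>).
Proof. by rewrite /= lextU. Qed.
Lemma dsum_lin : islin (rh (dsum F)). Proof. exact: lext_lin. Qed.

Lemma dsum_mor i x : islin (rh (F i)) -> rh (dsum F) (dinj i x) = tmap (dinj i) id (rh (F i) x).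
Proof.
move=> Hi.
move: x; apply: (@lin_eq _ _ _ (fun x => rh (dsum F) (dinj i x)) (fun x => tmap (dinj i) id (rh (F i) x))).
- exact: islin_comp dsum_lin (@dinj_lin i).
- exact: (islin_comp (g := tmap (dinj i) id) (f := rh (F i)) (islin_tmap _ _) Hi).
by move=> t; rewrite /dinj lextU dsum_rhoU.
Qed.

Lemma dsum_comod : (forall i, is_comod dC eC (F i)) -> is_comod dC eC (dsum F).
Proof.
move=> HF; apply: (comod_cover HC); first exact: dsum_lin.
case=> i t; exists (cI (F i)), (rh (F i)), (dinj i), << t >>; split.
- exact: HF.
- exact: (@dinj_lin i).
- by move=> x; apply: dsum_mor; case: (HF i).
- by rewrite /dinj lextU.
Qed.

Lemma comodD_dsum D : subsp D -> (forall i, comodD dC eC D (F i)) -> comodD dC eC D (dsum F).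
Proof.
move=> HD HF; split; first by apply: dsum_comod => i; case: (HF i).
move=> x; apply: (in_tens_lext HD) => -[i t].
by apply: (in_tens_tmap HD (@dinj_lin i)); case: (HF i).
Qed.
End Dsum.

End S7.
Section S8.
Variable K : fieldType.
Local Notation V I := (FV K I).
Local Notation rh M := (@crho K _ M).
Variables (B J : choiceType) (mH : V B -> V B -> V B) (uH : V B)
    (dH : V B -> V (B * B)%type) (eH : V B -> K)
    (dC : V J -> V (J * J)%type) (eC : V J -> K)
    (act : V B -> V J -> V J).
Hypotheses (HH : is_bialgebra mH uH dH eH) (HC : is_coalgebra dC eC)
    (HA : is_module_coalgebra mH uH dH eH dC eC act).

Lemma row_tmap_id (I J0 J1 : choiceType) (g : V J0 -> V J1) k (z : V (I * J0)%type) :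
  islin g -> row k (tmap id g z) = g (row k z).
Proof.
move=> Hg; move: z; lineq.
- exact: islin_comp (islin_row _) (islin_tmap _ _).
- exact: islin_comp Hg (islin_row _).
move=> [i j] /=; rewrite tmapU row_tens -tensU row_tens.
by rewrite (linZ Hg).
Qed.

Variables (IX : choiceType) (rhoX : V IX -> V (IX * B)%type) (M : comod K J).
Local Notation I := (cI M).
Local Notation ct := (ctens act rhoX M).

Definition Phi (u : V (IX * B)%type) (v : V (I * J)%type) : V ((IX * I) * J)%type :=
  lext (fun a => lext (fun b => tens << (a.1, b.1) >> (act << a.2 >> << b.2 >>)) v) u.
Definition Psi (w1 : V ((IX * B) * B)%type) (w2 : V ((I * J) * J)%type) : V (((IX * I) * J) * J)%type :=
  lext (fun a => lext (fun b => tens (tens << (a.1.1, b.1.1) >> (act << a.1.2 >> << b.1.2 >>))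
                                     (act << a.2 >> << b.2 >>)) w2) w1.

Lemma Phi_l v : islin (fun u => Phi u v). Proof. exact: lext_lin. Qed.
Lemma Phi_r u : islin (fun v => Phi u v). Proof. by apply: islin_lextp => a; apply: lext_lin. Qed.
Lemma Psi_l v : islin (fun u => Psi u v). Proof. exact: lext_lin. Qed.
Lemma Psi_r u : islin (fun v => Psi u v). Proof. by apply: islin_lextp => a; apply: lext_lin. Qed.
Lemma PhiU a b : Phi << a >> << b >> = tens << (a.1, b.1) >> (act << a.2 >> << b.2 >>).
Proof. by rewrite /Phi !lextU. Qed.
Lemma PsiU a b : Psi << a >> << b >> = tens (tens << (a.1.1, b.1.1) >> (act << a.1.2 >> << b.1.2 >>))
                                     (act << a.2 >> << b.2 >>).
Proof. by rewrite /Psi !lextU. Qed.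
Lemma ct_rhoU x m : rh ct << (x, m) >> = Phi (rhoX << x >>) (rh M << m >>).
Proof. by rewrite /= lextU. Qed.
Lemma ct_lin : islin (rh ct). Proof. exact: lext_lin. Qed.

Lemma contr_Phi u v : contr_r eC (Phi u v) = tens (contr_r eH u) (contr_r eC v).
Proof.
move: u; lineq.
- exact: islin_comp (islin_contr_r _) (Phi_l v).
- exact: islin_comp (islin_tensl _) (islin_contr_r _).
move=> a /=; move: v; lineq.
- exact: islin_comp (islin_contr_r _) (Phi_r _).
- exact: islin_comp (islin_tensr _) (islin_contr_r _).
move=> b /=; rewrite PhiU (contr_r_tens _ _ (eC_lin HC)) (act_eC HA).
rewrite /contr_r !lextU tensZ_l tensZ_r scalerA tensU.
by rewrite mulrC.
Qed.

Lemma Psi_tens p h q c : Psi (tens p << h >>) (tens q << c >>) = tens (Phi p q) (act << h >> << c >>).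
Proof.
move: p; lineq.
- exact: islin_comp (Psi_l _) (islin_tensl _).
- exact: islin_comp (islin_tensl _) (Phi_l _).
move=> a /=; move: q; lineq.
- exact: islin_comp (Psi_r _) (islin_tensl _).
- exact: islin_comp (islin_tensl _) (Phi_r _).
by move=> b /=; rewrite !tensU PsiU PhiU.
Qed.

Lemma L1 u v : islin rhoX -> islin (rh M) ->
  tmap (rh ct) id (Phi u v) = Psi (tmap rhoX id u) (tmap (rh M) id v).
Proof.
move=> HX HM; move: u; lineq.
- exact: islin_comp (islin_tmap _ _) (Phi_l v).
- exact: islin_comp (Psi_l _) (islin_tmap _ _).
move=> [x h] /=; move: v; lineq.
- exact: islin_comp (islin_tmap _ _) (Phi_r _).
- exact: islin_comp (Psi_r _) (islin_tmap _ _).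
move=> [m c] /=; rewrite PhiU /= (tmap_tens _ _ ct_lin (@islin_id _ _)) ct_rhoU !tmapU.
by rewrite Psi_tens.
Qed.

Lemma L2b a1 b1 h c : assocr (Psi (assocl (tens << a1 >> h)) (assocl (tens << b1 >> c))) =
  tens << (a1, b1) >> (tbil act h c).
Proof.
move: h; lineq.
- apply: islin_comp (@islin_assocr _ _ _ _) _.
  apply: islin_comp (Psi_l _) _.
  exact: islin_comp (@islin_assocl _ _ _ _) (islin_tensr _).
- exact: islin_comp (islin_tensr _) (lext_lin _).
move=> [h1 h2] /=; move: c; lineq.
- apply: islin_comp (@islin_assocr _ _ _ _) _.
  apply: islin_comp (Psi_r _) _.
  exact: islin_comp (@islin_assocl _ _ _ _) (islin_tensr _).
- apply: islin_comp (islin_tensr _) _.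
  by apply: islin_lextp => p; apply: lext_lin.
move=> [c1 c2] /=; rewrite !tensU /assocl !lextU /= PsiU /= assocr_tens.
by rewrite /tbil !lextU.
Qed.


Lemma L2 u v : assocr (Psi (assocl (tmap id dH u)) (assocl (tmap id dC v))) = tmap id dC (Phi u v).
Proof.
move: u; lineq.
- apply: islin_comp (@islin_assocr _ _ _ _) _.
  apply: islin_comp (Psi_l _) _.
  exact: islin_comp (@islin_assocl _ _ _ _) (islin_tmap _ _).
- exact: islin_comp (islin_tmap _ _) (Phi_l _).
move=> [a1 a2] /=; move: v; lineq.
- apply: islin_comp (@islin_assocr _ _ _ _) _.
  apply: islin_comp (Psi_r _) _.
  exact: islin_comp (@islin_assocl _ _ _ _) (islin_tmap _ _).
- exact: islin_comp (islin_tmap _ _) (Phi_r _).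
move=> [b1 b2] /=; rewrite !tmapU L2b PhiU /=.
rewrite (tmap_tens _ _ (@islin_id _ _) (dC_lin HC)).
by rewrite (act_dC HA).
Qed.

Lemma ct_comod : is_comodule dH eH rhoX -> is_comod dC eC M -> is_comod dC eC ct.
Proof.
move=> [HX HcoX HcuX] [HM HcoM HcuM]; split.
- exact: ct_lin.
- move=> w; move: w; lineq.
  + apply: islin_comp (@islin_assocr _ _ _ _) _.
    exact: islin_comp (islin_tmap _ _) ct_lin.
  + exact: islin_comp (islin_tmap _ _) ct_lin.
  move=> [x m]; rewrite (ct_rhoU x m) L1 //.
  have -> : tmap rhoX id (rhoX << x >>) = assocl (tmap id dH (rhoX << x >>)) by rewrite -HcoX assoclr.
  have -> : tmap (rh M) id (rh M << m >>) = assocl (tmap id dC (rh M << m >>)) by rewrite -HcoM assoclr.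
  exact: L2.
- move=> w; move: w; lineq.
  + exact: islin_comp (islin_contr_r _) ct_lin.
  + exact: (@islin_id _ _).
  by move=> [x m]; rewrite (ct_rhoU x m) contr_Phi HcuX HcuM tensU.
Qed.

Lemma ct_in_tens D : is_Hsubcoalg dC act D -> islin (rh M) ->
  (forall y, in_tens D (rh M y)) -> forall w, in_tens D (rh ct w).
Proof.
move=> [D0 DL _ Dact] HM HMD w.
have HD : subsp D by split.
apply: (in_tens_lext HD) => -[x m]; rewrite /=.
apply: (in_tens_lext HD) => a.
have -> : lext (fun b => tens << (a.1, b.1) >> (act << a.2 >> << b.2 >>)) (rh M << m >>) =
          tmap (fun w => tens << a.1 >> w) id (tmap id (act << a.2 >>) (rh M << m >>)).
  rewrite (tmap_compE (h := fun w => tens << a.1 >> w) (k := act << a.2 >>) _ (islin_tensr _) (@islin_id _ _) (@islin_id _ _) (actr_lin HA _)); last 2 first.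
    by move=> x0. by move=> y0.
  apply: eq_lext => b; rewrite /=. by rewrite tensU.
apply: (in_tens_tmap HD (islin_tensr _)).
apply: rows_in_tens => k; rewrite (row_tmap_id _ _ (actr_lin HA _)).
by apply: Dact; apply: (in_tens_rows HD).
Qed.

End S8.
Section S9.
Variable K : fieldType.
Local Notation V I := (FV K I).
Local Notation rh M := (@crho K _ M).
Variables (B J : choiceType) (mH : V B -> V B -> V B) (uH : V B)
    (dH : V B -> V (B * B)%type) (eH : V B -> K)
    (dC : V J -> V (J * J)%type) (eC : V J -> K)
    (act : V B -> V J -> V J).
Hypotheses (HH : is_bialgebra mH uH dH eH) (HC : is_coalgebra dC eC)
    (HA : is_module_coalgebra mH uH dH eH dC eC act).

Lemma Hsub_subsp D : is_Hsubcoalg dC act D -> subsp D.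
Proof. by case=> D0 DL _ _; split. Qed.

Lemma partB D : is_Hsubcoalg dC act D -> is_closed_Hmod dC eC dH eH act (comodD dC eC D).
Proof.
move=> HD; have HDs := Hsub_subsp HD; split.
- by move=> M [].
- move=> M N f _ HN Hf fi HMD; exact: (comodD_sub HDs HN Hf fi HMD).
- move=> M N f _ HN Hf surj HMD; exact: (comodD_quot HDs Hf surj HMD HN).
- move=> T F HF; exact: (comodD_dsum HC HDs HF).
- move=> IX rhoX M HX [HM HMD]; split.
  + exact: (ct_comod HC HA HX HM).
  + apply: (ct_in_tens HA HD) => //; by case: HM.
Qed.

Lemma lift_tens (T I : choiceType) (iota : V T -> V I) (W : V I -> Prop) (s : seq (V I * V J)) :
  islin iota -> (forall w, W w -> exists x, iota x = w) -> (forall p, p \in s -> W p.1) ->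
  exists s' : seq (V T * V J), tmap iota id (\sum_(p <- s') tens p.1 p.2) = \sum_(p <- s) tens p.1 p.2
     /\ map snd s' = map snd s.
Proof.
move=> Hi surj; elim: s => [|p s IH] Hs.
  by exists [::]; rewrite !big_nil (lin0 (islin_tmap _ _)).
have [s' [e1 e2]] := IH (fun q qs => Hs q ltac:(by rewrite inE qs orbT)).
have [x ex] := surj _ (Hs p (mem_head p s)).
exists ((x, p.2) :: s'); split; last by rewrite /= e2.
rewrite !big_cons (linD (islin_tmap _ _)) e1 /= (tmap_tens _ _ Hi (@islin_id _ _)) ex.
by [].
Qed.

Lemma in_tens_map (I : choiceType) (D : V J -> Prop) (s : seq (V I * V J)) (s2 : seq (V J)) :
  map snd s = s2 -> (forall y, y \in s2 -> D y) -> in_tens D (\sum_(p <- s) tens p.1 p.2).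
Proof.
move=> e H; exists s; split => // p ps; apply: H; rewrite -e; exact: map_f.
Qed.

Lemma partC D1 D2 : is_Hsubcoalg dC act D1 -> is_Hsubcoalg dC act D2 ->
  comodD dC eC D1 = comodD dC eC D2 -> forall c, D1 c -> D2 c.
Proof.
move=> H1 H2 E c D1c.
have HD1 := Hsub_subsp H1; have HD2 := Hsub_subsp H2.
have [T [iota [Hi ii iW isurj]]] := subsp_obj HD1.
have ex : forall y : V T, exists z, tmap iota id z = dC (iota y) /\ in_tens D1 z.
  move=> y; case: H1 => _ _ H1D _.
  have [s [Hs es]] := H1D _ (iW y).
  have [s' [e1 e2]] := lift_tens Hi isurj (fun p ps => (Hs p ps).1).
  exists (\sum_(p <- s') tens p.1 p.2); split; first by rewrite e1 es.
  by apply: (in_tens_map e2) => q /mapP [p ps ->]; exact: (Hs p ps).2.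
pose rQ y := projT1 (cid (ex y)).
have rQP y : tmap iota id (rQ y) = dC (iota y) /\ in_tens D1 (rQ y) by rewrite /rQ; case: cid.
pose Q := @Comod K J T rQ.
have HQ : is_comod dC eC Q.
  apply: (comod_sub HC (regular_comod HC) Hi ii) => x; exact: (rQP x).1.
have : comodD dC eC D2 Q by rewrite -E; split => // y; exact: (rQP y).2.
case=> _ HQ2.
have [y <-] := isurj c D1c.
case: HC => _ HeC _ Hcl _.
rewrite -[iota y]Hcl -(rQP y).1.
have [s [Hs es]] := HQ2 y.
have es2 : rQ y = \sum_(p <- s) tens p.1 p.2 := es.
rewrite es2.
rewrite (lin_sum (islin_tmap _ _)) (lin_sum (islin_contr_l _)) big_seq.
apply: (subsp_sum HD2) => p ps.
rewrite (tmap_tens _ _ Hi (@islin_id _ _)) (contr_l_tens _ _ HeC).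
by apply: (subspZ HD2); apply: Hs.
Qed.

End S9.
Section S10.
Variable K : fieldType.
Local Notation V I := (FV K I).
Local Notation rh M := (@crho K _ M).
Variables (B J : choiceType) (mH : V B -> V B -> V B) (uH : V B)
    (dH : V B -> V (B * B)%type) (eH : V B -> K)
    (dC : V J -> V (J * J)%type) (eC : V J -> K)
    (act : V B -> V J -> V J).
Hypotheses (HH : is_bialgebra mH uH dH eH) (HC : is_coalgebra dC eC)
    (HA : is_module_coalgebra mH uH dH eH dC eC act).

Lemma coef_assocr (I J1 J2 : choiceType) (phi : I -> K) (w : V ((I * J1) * J2)%type) :
  coef phi (assocr w) = tmap (coef phi) id w.
Proof.
move: w; lineq.
- exact: islin_comp (islin_coef _) (@islin_assocr _ _ _ _).
- exact: islin_tmap.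
move=> [[i j] k]; rewrite /assocr lextU tmapU /= /coef !lextU /=.
by rewrite tensZ_l tensU.
Qed.

Lemma dC_coef (I : choiceType) (phi : I -> K) (z : V (I * J)%type) :
  dC (coef phi z) = coef phi (tmap id dC z).
Proof.
move: z; lineq.
- exact: islin_comp (dC_lin HC) (islin_coef _).
- exact: islin_comp (islin_coef _) (islin_tmap _ _).
move=> [i j]; rewrite tmapU coef_tensU /coef lextU /=.
by rewrite (linZ (dC_lin HC)).
Qed.

Lemma coef_comod (N : comod K J) (phi : cI N -> K) n : is_comod dC eC N ->
  dC (coef phi (rh N n)) = tmap (fun w => coef phi (rh N w)) id (rh N n).
Proof.
case=> HNl HNco _; rewrite dC_coef -HNco coef_assocr.
rewrite (tmap_compE (h := fun w => coef phi (rh N w)) (k := id) _ (islin_coef (J:=J) phi) (@islin_id _ _) HNl (@islin_id _ _)).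
- by [].
- by [].
- by [].
Qed.

Lemma assocl_tmap (I I' L : choiceType) (x : V L) (h : V I -> V I') (z : V (I * J)%type) :
  islin h -> assocl (tens x (tmap h id z)) = tmap (fun w => tens x (h w)) id z.
Proof.
move=> Hh; move: z; lineq.
- apply: islin_comp (@islin_assocl _ _ _ _) _.
  exact: islin_comp (islin_tensr _) (islin_tmap _ _).
- exact: islin_tmap.
by move=> [a b]; rewrite !tmapU assocl_tens.
Qed.

Lemma coef_tmap_dinj (T : choiceType) (F : T -> comod K J) i (phi : cI (dsum F) -> K) (phii : cI (F i) -> K) (z : V (cI (F i) * J)%type) :
  (forall t, phi (@Tagged T i (fun i => cI (F i)) t) = phii t) ->
  coef phi (tmap (@dinj K J T F i) id z) = coef phii z.
Proof.
move=> Hp; move: z; lineq.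
- exact: islin_comp (islin_coef _) (islin_tmap _ _).
- exact: islin_coef.
by move=> [t j]; rewrite tmapU /dinj lextU coef_tensU Hp /coef lextU.
Qed.

Lemma actZZ a b h c : act (a *: h) (b *: c) = (a * b) *: act h c.
Proof. by rewrite (linZ (actl_lin HA _)) (linZ (actr_lin HA _)) scalerA mulrC. Qed.

Variable P : comod K J -> Prop.
Hypothesis HP : is_closed_Hmod dC eC dH eH act P.

Lemma P_comod M : P M -> is_comod dC eC M. Proof. by case: HP => H _ _ _ _; apply: H. Qed.

Definition Dp (c : V J) := exists (N : comod K J) (phi : cI N -> K) (n : V (cI N)),
  P N /\ c = coef phi (rh N n).

Lemma Dp0 : Dp 0.
Proof.
pose F : void -> comod K J := fun v => match v with end.
exists (dsum F), (fun _ => 0), 0; split.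
  by case: HP => _ _ _ H _; apply: H; case.
by rewrite (lin0 (@dsum_lin _ _ _ F)) (lin0 (islin_coef _)).
Qed.

Lemma DpL a x y : Dp x -> Dp y -> Dp (a *: x + y).
Proof.
move=> [N1 [phi1 [n1 [P1 ->]]]] [N2 [phi2 [n2 [P2 ->]]]].
pose F (b : bool) := if b then N1 else N2.
pose phi (p : cI (dsum F)) : K :=
  (if tag p as b return cI (F b) -> K then phi1 else phi2) (tagged p).
exists (dsum F), phi, (a *: @dinj K J bool F true n1 + @dinj K J bool F false n2); split.
  by case: HP => _ _ _ H _; apply: H; case.
have [H1 _ _] := P_comod P1; have [H2 _ _] := P_comod P2.
rewrite (linE (@dsum_lin _ _ _ F)) (linE (islin_coef _)).
rewrite (@dsum_mor K J bool F true n1 H1) (@dsum_mor K J bool F false n2 H2).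
rewrite (@coef_tmap_dinj bool F true phi phi1) //.
by rewrite (@coef_tmap_dinj bool F false phi phi2).
Qed.

Lemma Dp_D c : Dp c -> in_tens2 Dp (dC c).
Proof.
move=> [N [phi [n [PN ->]]]]; have HN := P_comod PN; have [HNl _ _] := HN.
rewrite (coef_comod _ _ HN) (tmap_rows _ (islin_comp (islin_coef _) HNl)).
exists [seq (coef phi (rh N << i >>), row i (rh N n)) | i <- fsts (rh N n)]; split.
  move=> p /mapP [i _ ->]; split.
  - by exists N, phi, << i >>.
  - by exists N, (fun k => (k == i)%:R), n.
by rewrite big_map.
Qed.

Lemma coef_Phi (N : comod K J) (phi : cI N -> K) u v :
  coef (fun p : (B * cI N)%type => eH << p.1 >> * phi p.2) (@Phi K B J act B N u v) =
  act (contr_l eH u) (coef phi v).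
Proof.
move: u; lineq.
- exact: islin_comp (islin_coef _) (Phi_l _ _).
- exact: islin_comp (actl_lin HA _) (islin_contr_l _).
move=> [b h2]; move: v; lineq.
- exact: islin_comp (islin_coef _) (Phi_r _ _).
- exact: islin_comp (actr_lin HA _) (islin_coef _).
move=> [t j]; rewrite /Phi !lextU /= coef_tensU /contr_l /coef !lextU /=.
by rewrite actZZ.
Qed.

Lemma Dp_act h c : Dp c -> Dp (act h c).
Proof.
move=> [N [phi [n [PN ->]]]]; have HN := P_comod PN; have [HNl _ _] := HN.
have HX := regularH HH.
pose N' := ctens act dH N.
exists N', (fun p : cI N' => eH << p.1 >> * phi p.2), (tens h n); split.
  by case: HP => _ _ _ _ H; apply: H.
have -> : rh N' (tens h n) = @Phi K B J act B N (dH h) (rh N n).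
  move: h; lineq.
  - exact: islin_comp (@ct_lin K B J act B dH N) (islin_tensl _).
  - exact: islin_comp (Phi_l _ _) (dH_lin HH).
  move=> b; move: n {HN PN}; lineq.
  - exact: islin_comp (@ct_lin K B J act B dH N) (islin_tensr _).
  - exact: islin_comp (Phi_r _ _) HNl.
  by move=> t; rewrite tensU /= lextU.
rewrite coef_Phi.
by case: HH => _ _ _ [] _ _ _ -> _.
Qed.

Lemma Dp_sub : is_Hsubcoalg dC act Dp.
Proof. split; [exact: Dp0 | exact: DpL | exact: Dp_D | exact: Dp_act]. Qed.
Lemma Dp_subsp : subsp Dp.
Proof. split; [exact: Dp0 | exact: DpL]. Qed.


Lemma Dp_choice c : Dp c ->
  {N : comod K J & {phi : cI N -> K & {n : V (cI N) | P N /\ c = coef phi (rh N n)}}}.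
Proof.
move=> H; have [N HN] := cid H; have [phi Hphi] := cid HN; have [n Hn] := cid Hphi.
exact: (existT _ N (existT _ phi (exist _ n Hn))).
Qed.

Lemma hard (M : comod K J) : comodD dC eC Dp M -> P M.
Proof.
move=> [HM HMD]; have [HMl HMco HMcu] := HM.
have [P_c P_sub P_quot P_dsum P_ct] := HP.
have Hrow : forall p : (cI M * cI M)%type, Dp (row p.1 (rh M << p.2 >>)).
  by move=> p; apply: (in_tens_rows Dp_subsp (HMD _)).
pose wp p := Dp_choice (Hrow p).
pose F p := projT1 (wp p).
pose phw p : cI (F p) -> K := projT1 (projT2 (wp p)).
pose nw p : V (cI (F p)) := proj1_sig (projT2 (projT2 (wp p))).
have Hw : forall p, P (F p) /\ row p.1 (rh M << p.2 >>) = coef (phw p) (rh (F p) (nw p)).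
  by move=> p; exact: (proj2_sig (projT2 (projT2 (wp p)))).
have HFl : forall p, islin (rh (F p)) by move=> p; case: (P_c _ (Hw p).1).
pose S := dsum F.
have PS : P S by apply: P_dsum => p; exact: (Hw p).1.
have HS := P_c _ PS.
pose g : V (cI S) -> V (cI M * J)%type :=
  lext (fun q : cI S => tens << (tag q).1 >> (coef (phw (tag q)) (rh (F (tag q)) << tagged q >>))).
have g_lin : islin g by exact: lext_lin.
have g_dinj : forall p y, g (@dinj K J _ F p y) = tens << p.1 >> (coef (phw p) (rh (F p) y)).
  move=> p; lineq.
  - exact: islin_comp g_lin (@dinj_lin K J _ F p).
  - exact: islin_comp (islin_tensr _) (islin_comp (islin_coef _) (HFl p)).
  by move=> t; rewrite /dinj lextU /g lextU.
pose tau (w : V (cI M * J)%type) := assocl (tmap id dC w).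
have tau_lin : islin tau.
  exact: islin_comp (@islin_assocl _ _ _ _) (islin_tmap _ _).
have g_mor : forall s, tau (g s) = tmap g id (rh S s).
  lineq.
  - exact: islin_comp tau_lin g_lin.
  - exact: islin_comp (islin_tmap _ _) (@dsum_lin _ _ _ F).
  move=> [p t].
  have -> : << @Tagged _ p (fun p => cI (F p)) t >> = @dinj K J _ F p << t >> by rewrite /dinj lextU.
  rewrite g_dinj (@dsum_mor K J _ F p _ (HFl p)).
  rewrite /tau (tmap_tens _ _ (@islin_id _ _) (dC_lin HC)) (coef_comod _ _ (P_c _ (Hw p).1)).
  rewrite (assocl_tmap _ _ (islin_comp (islin_coef _) (HFl p))).
  rewrite (tmap_compE (h := fun w => tens << p.1 >> (coef (phw p) (rh (F p) w))) (k := id) _ g_lin (@islin_id _ _) (@dinj_lin K J _ F p) (@islin_id _ _)).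
  - by [].
  - by move=> x; rewrite g_dinj.
  - by [].
pose W w := exists s, g s = w.
have HW : subsp W.
  split; first by exists 0; rewrite (lin0 g_lin).
  by move=> a x y [s1 <-] [s2 <-]; exists (a *: s1 + s2); rewrite (linE g_lin).
have [T [iota [Hi ii iW isurj]]] := subsp_obj HW.
have ex : forall y, exists z, tmap iota id z = tau (iota y).
  move=> y; have [s es] := iW y.
  rewrite -es g_mor (tmap_rows _ g_lin) -(big_map (fun j => (g << j >>, row j (rh S s))) xpredT (fun p => tens p.1 p.2)).
  have [s' [e1 _]] := lift_tens (s := [seq (g << j >>, row j (rh S s)) | j <- fsts (rh S s)]) Hi isurj
     (fun p ps => ltac:(by case/mapP: ps => j _ ->; exists << j >>)).
  by exists (\sum_(p <- s') tens p.1 p.2).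
pose rQ y := projT1 (cid (ex y)).
have rQP : forall y, tmap iota id (rQ y) = tau (iota y) by move=> y; rewrite /rQ; case: cid.
pose Q := @Comod K J T rQ.
have rQ_lin : islin rQ.
  move=> a u v; apply: (tmap_inj (J:=J) Hi ii).
  by rewrite (linE (islin_tmap _ _)) !rQP (linE Hi) (linE tau_lin).
have Wg : forall s, W (g s) by move=> s; exists s.
pose g' s := projT1 (cid (isurj _ (Wg s))).
have g'P : forall s, iota (g' s) = g s by move=> s; rewrite /g'; case: cid.
have g'_lin : islin g'.
  by move=> a u v; apply: ii; rewrite (linE Hi) !g'P (linE g_lin).
have g'_surj : forall y, exists s, g' s = y.
  by move=> y; have [s es] := iW y; exists s; apply: ii; rewrite g'P.
have g'_mor : forall s, rQ (g' s) = tmap g' id (rh S s).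
  move=> s; apply: (tmap_inj (J:=J) Hi ii).
  rewrite rQP g'P g_mor.
  rewrite (tmap_compE (h := g) (k := id) _ Hi (@islin_id _ _) g'_lin (@islin_id _ _)).
  - by [].
  - by move=> x; rewrite g'P.
  - by [].
have HQ : is_comod dC eC Q.
  apply: (comod_cover HC rQ_lin) => k.
  have [s es] := g'_surj << k >>.
  by exists (cI S), (rh S), g', s; split.
have PQ : P Q.
  apply: (P_quot S Q g' HS HQ _ g'_surj PS).
  by split; [exact: g'_lin | exact: g'_mor].
have W_rhoM : forall x, W (rh M x).
  move=> x; rewrite (lin_basis HMl); apply: (subsp_lext HW) => i.
  rewrite (@sum_rows _ _ _ (rh M << i >>) (fsts (rh M << i >>))); last by move=> p; apply: fstsP.
  apply: (subsp_sum HW) => k _.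
  exists (@dinj K J _ F (k, i) (nw (k, i))).
  by rewrite g_dinj /= -(Hw (k, i)).2.
pose r' x := projT1 (cid (isurj _ (W_rhoM x))).
have r'P : forall x, iota (r' x) = rh M x by move=> x; rewrite /r'; case: cid.
have r'_lin : islin r'.
  by move=> a u v; apply: ii; rewrite (linE Hi) !r'P (linE HMl).
have r'_inj : injective r'.
  move=> x y e; rewrite -[x]HMcu -[y]HMcu -!r'P; by rewrite e.
have r'_mor : forall x, rQ (r' x) = tmap r' id (rh M x).
  move=> x; apply: (tmap_inj (J:=J) Hi ii).
  rewrite rQP r'P /tau -HMco assoclr.
  rewrite (tmap_compE (h := rh M) (k := id) _ Hi (@islin_id _ _) r'_lin (@islin_id _ _)).
  - by [].
  - by move=> y; rewrite r'P.
  - by [].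
apply: (P_sub Q M r' HQ HM _ r'_inj PQ).
by split; [exact: r'_lin | exact: r'_mor].
Qed.

Lemma partD : exists D, is_Hsubcoalg dC act D /\ P = comodD dC eC D.
Proof.
exists Dp; split; first exact: Dp_sub.
apply: funext => M; apply: propext; split.
- move=> PM; split; first exact: P_comod.
  move=> x; apply: rows_in_tens => i.
  by exists M, (fun k => (k == i)%:R), x.
- exact: hard.
Qed.

End S10.

Unset Implicit Arguments.

Theorem theorem6p1 (K : fieldType) (B J : choiceType)
    (mH : FV K B -> FV K B -> FV K B) (uH : FV K B)
    (dH : FV K B -> FV K (B * B)%type) (eH : FV K B -> K)
    (dC : FV K J -> FV K (J * J)%type) (eC : FV K J -> K)
    (act : FV K B -> FV K J -> FV K J)
    (HH : is_bialgebra mH uH dH eH)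
    (HC : is_coalgebra dC eC)
    (HA : is_module_coalgebra mH uH dH eH dC eC act) :
  (* D |-> M^D maps H-module subcoalgebras to closed M^H-module subcategories *)
  (forall D, is_Hsubcoalg dC act D -> is_closed_Hmod dC eC dH eH act (comodD dC eC D)) /\
  (* injective *)
  (forall D1 D2, is_Hsubcoalg dC act D1 -> is_Hsubcoalg dC act D2 ->
     comodD dC eC D1 = comodD dC eC D2 -> D1 = D2) /\
  (* surjective *)
  (forall P, is_closed_Hmod dC eC dH eH act P ->
     exists D, is_Hsubcoalg dC act D /\ P = comodD dC eC D).
Proof.
split; [|split].
- move=> D HD; exact: (partB HC HA HD).
- move=> D1 D2 H1 H2 E; apply: funext => c; apply: propext; split.
  + exact: (partC HC H1 H2 E).
  + exact: (partC HC H2 H1 (esym E)).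
- move=> P HP; exact: (partD HH HC HA HP).
Qed.
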